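(* Let $p:[0,\infty)\to[0,1]$ be log-convex, strictly decreasing, and twice continuously differentiable on $[0,\infty)$, and for $\alpha\in(0,1]$ let $h(x)=(-\log p(x))^{\alpha}$. If $\alpha\in(0,1)$, then $h$ is strictly concave on $[0,\infty)$. Moreover, $h$ is concave on $[0,\infty)$ for every $\alpha\in(0,1]$.
   Context: Here $p$ is the attack success probability on an edge of an attack graph as a function of the security investment $x$ on that edge, and $\alpha$ is the parameter of the Prelec probability weighting function $w(p)=\exp[-(-\log p)^{\alpha}]$. *)

(* Defs.v *)
From Stdlib Require Import Reals.
From Coquelicot Require Import Coquelicot.
Open Scope R_scope.

Definition nonneg (x : R) : Prop := 0 <= x.

(* Real power with the convention 0^a = 0 (a > 0 in all uses), and
   x^a = exp (a ln x) for x > 0. *)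
Definition rpow (x a : R) : R :=
  if Req_EM_T x 0 then 0 else Rpower x a.

Definition convex_on_nonneg (f : R -> R) : Prop :=
  forall x y t, 0 <= x -> 0 <= y -> 0 <= t <= 1 ->
    f (t * x + (1 - t) * y) <= t * f x + (1 - t) * f y.

Definition concave_on_nonneg (f : R -> R) : Prop :=
  forall x y t, 0 <= x -> 0 <= y -> 0 <= t <= 1 ->
    t * f x + (1 - t) * f y <= f (t * x + (1 - t) * y).

Definition strictly_concave_on_nonneg (f : R -> R) : Prop :=
  forall x y t, 0 <= x -> 0 <= y -> x <> y -> 0 < t < 1 ->
    t * f x + (1 - t) * f y < f (t * x + (1 - t) * y).

Definition log_convex_on_nonneg (p : R -> R) : Prop :=
  (forall x, 0 <= x -> 0 < p x) /\ convex_on_nonneg (fun x => ln (p x)).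

Definition strictly_decreasing_on_nonneg (p : R -> R) : Prop :=
  forall x y, 0 <= x -> x < y -> p y < p x.

Definition deriv_on_nonneg (f f' : R -> R) : Prop :=
  (forall x, 0 < x -> is_derive f x (f' x)) /\
  filterlim (fun t => (f t - f 0) / t) (at_right 0) (locally (f' 0)).

Definition continuous_on_nonneg (f : R -> R) : Prop :=
  (forall x, 0 < x -> continuous f x) /\
  filterlim f (at_right 0) (locally (f 0)).

Definition C2_on_nonneg (f : R -> R) : Prop :=
  exists f1 f2 : R -> R,
    deriv_on_nonneg f f1 /\ deriv_on_nonneg f1 f2 /\ continuous_on_nonneg f2.

(* Main.v *)
Require Import Defs.
From Stdlib Require Import Reals Lra Psatz.
From Coquelicot Require Import Coquelicot.
Open Scope R_scope.

Lemma expA a L : 0 < a <= 1 -> exp (a*L) <= a * exp L + (1 - a).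
Proof.
  intros Ha.
  assert (E1 : exp L = exp (a*L) * exp ((1-a)*L)) by (rewrite <- exp_plus; f_equal; ring).
  assert (E2 : 1 = exp (a*L) * exp (-(a*L))) by (rewrite <- exp_plus, <- exp_0; f_equal; ring).
  pose proof (exp_ineq1_le ((1-a)*L)). pose proof (exp_ineq1_le (-(a*L))).
  pose proof (exp_pos (a*L)).
  assert (a * exp ((1 - a) * L) + (1-a) * exp (-(a*L)) >= 1) by nra.
  rewrite E1. rewrite E2 at 2. nra.
Qed.

Lemma expAs a L : 0 < a < 1 -> L <> 0 -> exp (a*L) < a * exp L + (1 - a).
Proof.
  intros Ha HL.
  assert (E1 : exp L = exp (a*L) * exp ((1-a)*L)) by (rewrite <- exp_plus; f_equal; ring).
  assert (E2 : 1 = exp (a*L) * exp (-(a*L))) by (rewrite <- exp_plus, <- exp_0; f_equal; ring).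
  assert ((1-a)*L <> 0) by (intro H; apply Rmult_integral in H; destruct H; lra).
  pose proof (exp_ineq1 ((1-a)*L) H). pose proof (exp_ineq1_le (-(a*L))).
  pose proof (exp_pos (a*L)).
  assert (a * exp ((1 - a) * L) + (1-a) * exp (-(a*L)) > 1) by nra.
  rewrite E1. rewrite E2 at 2. nra.
Qed.

Lemma rpow0 a : rpow 0 a = 0.
Proof. unfold rpow; destruct (Req_EM_T 0 0); [reflexivity|lra]. Qed.

Lemma rpow_pos w a : 0 < w -> rpow w a = exp (a * ln w).
Proof. intros; unfold rpow; destruct (Req_EM_T w 0); [lra|]. unfold Rpower; reflexivity. Qed.

Lemma keyK a m w : 0 < a <= 1 -> 0 < m -> 0 <= w ->
  rpow w a <= rpow m a * (1 - a) + a * rpow m a * (w / m).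
Proof.
  intros Ha Hm Hw. rewrite (rpow_pos m) by lra.
  pose proof (exp_pos (a * ln m)).
  destruct (Req_dec w 0) as [->|Hw0].
  - rewrite rpow0. unfold Rdiv. rewrite Rmult_0_l, Rmult_0_r. nra.
  - rewrite rpow_pos by lra.
    assert (Ew : a * ln w = a * ln m + a * (ln w - ln m)) by ring.
    rewrite Ew, exp_plus.
    assert (Ed : exp (ln w - ln m) = w / m).
    { unfold Rminus. rewrite exp_plus, exp_Ropp, !exp_ln by lra. reflexivity. }
    pose proof (expA a (ln w - ln m) Ha). rewrite Ed in H0. nra.
Qed.

Lemma keyKs a m w : 0 < a < 1 -> 0 < m -> 0 <= w -> w <> m ->
  rpow w a < rpow m a * (1 - a) + a * rpow m a * (w / m).
Proof.
  intros Ha Hm Hw Hwm. rewrite (rpow_pos m) by lra.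
  pose proof (exp_pos (a * ln m)).
  destruct (Req_dec w 0) as [->|Hw0].
  - rewrite rpow0. unfold Rdiv. rewrite Rmult_0_l, Rmult_0_r. nra.
  - rewrite rpow_pos by lra.
    assert (Ew : a * ln w = a * ln m + a * (ln w - ln m)) by ring.
    rewrite Ew, exp_plus.
    assert (Ed : exp (ln w - ln m) = w / m).
    { unfold Rminus. rewrite exp_plus, exp_Ropp, !exp_ln by lra. reflexivity. }
    assert (HL : ln w - ln m <> 0).
    { intro HL. apply Hwm. destruct (Rtotal_order w m) as [h|[h|h]]; auto.
      - pose proof (ln_increasing w m ltac:(lra) h); lra.
      - pose proof (ln_increasing m w ltac:(lra) h); lra. }
    pose proof (expAs a (ln w - ln m) Ha HL). rewrite Ed in H0. nra.
Qed.

Lemma rpow_nonneg w a : 0 <= rpow w a.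
Proof. unfold rpow; destruct (Req_EM_T w 0); [lra|]. unfold Rpower; pose proof (exp_pos (a * ln w)); lra. Qed.

Lemma phi_concave a u v t : 0 < a <= 1 -> 0 <= u -> 0 <= v -> 0 <= t <= 1 ->
  t * rpow u a + (1 - t) * rpow v a <= rpow (t*u + (1-t)*v) a.
Proof.
  intros Ha Hu Hv Ht. set (m := t*u+(1-t)*v).
  assert (Hm0 : 0 <= m) by (unfold m; nra).
  destruct (Req_dec m 0) as [Hm|Hm].
  - rewrite Hm, rpow0.
    assert (t * rpow u a = 0).
    { destruct (Req_dec t 0) as [->|]; [ring|]. assert (u = 0) by (unfold m in Hm; nra). subst; rewrite rpow0; ring. }
    assert ((1-t) * rpow v a = 0).
    { destruct (Req_dec t 1) as [->|]; [ring|]. assert (v = 0) by (unfold m in Hm; nra). subst; rewrite rpow0; ring. }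
    lra.
  - assert (Hmp : 0 < m) by lra.
    pose proof (keyK a m u Ha Hmp Hu). pose proof (keyK a m v Ha Hmp Hv).
    assert (t * (u/m) + (1-t) * (v/m) = 1) by (replace (t*(u/m)+(1-t)*(v/m)) with (m * /m) by (unfold m, Rdiv; ring); apply Rinv_r; lra).
    apply Rmult_le_compat_l with (r := t) in H; [|lra].
    apply Rmult_le_compat_l with (r := 1-t) in H0; [|lra].
    assert (E : rpow m a = t * (rpow m a * (1 - a) + a * rpow m a * (u / m)) + (1 - t) * (rpow m a * (1 - a) + a * rpow m a * (v / m))).
    { transitivity (rpow m a * (1 - a) + a * rpow m a * (t * (u/m) + (1-t)*(v/m))); [rewrite H1; ring| ring]. }
    lra.
Qed.

Lemma phi_strict a u v t : 0 < a < 1 -> 0 <= u -> 0 <= v -> u <> v -> 0 < t < 1 ->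
  t * rpow u a + (1 - t) * rpow v a < rpow (t*u + (1-t)*v) a.
Proof.
  intros Ha Hu Hv Huv Ht. set (m := t*u+(1-t)*v).
  assert (Hmp : 0 < m) by (unfold m; destruct (Req_dec u 0); nra).
  assert (Ha' : 0 < a <= 1) by lra.
  assert (t * (u/m) + (1-t) * (v/m) = 1) by (replace (t*(u/m)+(1-t)*(v/m)) with (m * /m) by (unfold m, Rdiv; ring); apply Rinv_r; lra).
  destruct (Req_dec u m) as [Hum|Hum].
  - assert (Hvm : v <> m) by congruence.
    pose proof (keyK a m u Ha' Hmp Hu). pose proof (keyKs a m v Ha Hmp Hv Hvm).
    apply Rmult_le_compat_l with (r := t) in H0; [|lra].
    apply Rmult_lt_compat_l with (r := 1-t) in H1; [|lra].
    assert (E : rpow m a = t * (rpow m a * (1 - a) + a * rpow m a * (u / m)) + (1 - t) * (rpow m a * (1 - a) + a * rpow m a * (v / m))).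
    { transitivity (rpow m a * (1 - a) + a * rpow m a * (t * (u/m) + (1-t)*(v/m))); [rewrite H; ring| ring]. }
    lra.
  - pose proof (keyKs a m u Ha Hmp Hu Hum). pose proof (keyK a m v Ha' Hmp Hv).
    apply Rmult_lt_compat_l with (r := t) in H0; [|lra].
    apply Rmult_le_compat_l with (r := 1-t) in H1; [|lra].
    assert (E : rpow m a = t * (rpow m a * (1 - a) + a * rpow m a * (u / m)) + (1 - t) * (rpow m a * (1 - a) + a * rpow m a * (v / m))).
    { transitivity (rpow m a * (1 - a) + a * rpow m a * (t * (u/m) + (1-t)*(v/m))); [rewrite H; ring| ring]. }
    lra.
Qed.

Lemma phi_mono a u v : 0 < a -> 0 <= u <= v -> rpow u a <= rpow v a.
Proof.
  intros Ha H. destruct (Req_dec u 0) as [->|Hu].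
  - rewrite rpow0; apply rpow_nonneg.
  - rewrite !rpow_pos by lra.
    destruct (Req_dec u v) as [->|]; [lra|].
    pose proof (ln_increasing u v ltac:(lra) ltac:(lra)).
    apply Rlt_le, exp_increasing. nra.
Qed.

Theorem lemma1 (p : R -> R) :
  (forall x, 0 <= x -> 0 <= p x <= 1) ->
  log_convex_on_nonneg p ->
  strictly_decreasing_on_nonneg p ->
  C2_on_nonneg p ->
  (forall alpha : R, 0 < alpha < 1 ->
     strictly_concave_on_nonneg (fun x => rpow (- ln (p x)) alpha)) /\
  (forall alpha : R, 0 < alpha <= 1 ->
     concave_on_nonneg (fun x => rpow (- ln (p x)) alpha)).
Proof.
  intros H01 [Hpos Hconv] Hdec _.
  assert (Gnn : forall x, 0 <= x -> 0 <= - ln (p x)).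
  { intros x Hx. pose proof (Hpos x Hx). pose proof (H01 x Hx).
    destruct (Req_dec (p x) 1) as [->|]; [rewrite ln_1; lra|].
    pose proof (ln_increasing (p x) 1 ltac:(lra) ltac:(lra)). rewrite ln_1 in H2; lra. }
  assert (Gc : forall x y t, 0 <= x -> 0 <= y -> 0 <= t <= 1 ->
     t * (- ln (p x)) + (1-t) * (- ln (p y)) <= - ln (p (t*x + (1-t)*y))).
  { intros x y t Hx Hy Ht. pose proof (Hconv x y t Hx Hy Ht). simpl in H. lra. }
  assert (Gi : forall x y, 0 <= x -> x < y -> - ln (p x) < - ln (p y)).
  { intros x y Hx Hxy. pose proof (Hdec x y Hx Hxy).
    pose proof (ln_increasing (p y) (p x) (Hpos y ltac:(lra)) H). lra. }
  split.
  - intros a Ha x y t Hx Hy Hxy Ht. simpl.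
    assert (Hz : 0 <= t*x + (1-t)*y) by nra.
    eapply Rlt_le_trans.
    + apply phi_strict; try lra; try apply Gnn; auto.
      intro E. destruct (Rtotal_order x y) as [h|[h|h]]; [|contradiction|].
      * pose proof (Gi x y Hx h); lra.
      * pose proof (Gi y x Hy h); lra.
    + apply phi_mono; [lra|]. split.
      * pose proof (Gnn x Hx); pose proof (Gnn y Hy); nra.
      * apply Gc; lra.
  - intros a Ha x y t Hx Hy Ht. simpl.
    eapply Rle_trans.
    + apply phi_concave; try lra; apply Gnn; auto.
    + apply phi_mono; [lra|]. split.
      * pose proof (Gnn x Hx); pose proof (Gnn y Hy); nra.
      * apply Gc; lra.
Qed.
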